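(* For all types $A$ and $B$: (1) the types $\mathbb U$, $\flat A$ and $A\rightarrow B$ are pure; (2) if $A$ and $B$ are pure, then so are $A+B$ and $A\times B$; (3) $\sharp A$ and $A\Rightarrow B$ are not pure, unless they are empty (i.e. unless their semantics is empty).
   Context: Calculus: pure values $v::=x\mid\lambda x.\vec{s}\mid *\mid (v_1,v_2)\mid \mathtt{inl}(v)\mid\mathtt{inr}(v)$; term distributions are formal $\mathbb C$-combinations of pure terms modulo the weak-vector-space congruence (which does not identify $0\cdot t$ with $\vec0$); each has a unique canonical form $\sum_i\alpha_it_i$ with distinct $t_i$, whose domain is $\{t_i\}$. Pairs, $\mathtt{inl}$, $\mathtt{inr}$ extend (bi)linearly to value distributions. $\mathcal V$ = closed pure values, $\vec{\mathcal V}$ = closed value distributions, with $\langle\sum_i\alpha_iv_i|\sum_j\beta_jw_j\rangle=\sum_{i,j}\overline{\alpha_i}\beta_j\delta_{v_i,w_j}$, $\mathcal S$ the unit sphere, $\mathrm{Span}(X)$ finite linear combinations, $\flat X=\bigcup_{\vec v\in X}\mathrm{dom}(\vec v)$. Types $A,B::=\mathbb U\mid\flat A\mid\sharp A\mid A+B\mid A\times B\mid A\rightarrow B\mid A\Rightarrow B$ with $[\![\mathbb U]\!]=\{*\}$, $[\![\flat A]\!]=\flat[\![A]\!]$, $[\![\sharp A]\!]=\mathrm{Span}([\![A]\!])\cap\mathcal S$, $[\![A+B]\!]=\{\mathtt{inl}(\vec v):\vec v\in[\![A]\!]\}\cup\{\mathtt{inr}(\vec w):\vec w\in[\![B]\!]\}$,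 $[\![A\times B]\!]=\{(\vec v,\vec w):\vec v\in[\![A]\!],\vec w\in[\![B]\!]\}$, $[\![A\rightarrow B]\!]=\{\lambda x.\vec t\ \text{closed}:\forall\vec v\in[\![A]\!],\ \vec t\langle x:=\vec v\rangle\Vdash B\}$, $[\![A\Rightarrow B]\!]=\{(\sum_i\alpha_i\cdot\lambda x.\vec t_i)\in\mathcal S:\forall\vec v\in[\![A]\!],\ (\sum_i\alpha_i\cdot\vec t_i\langle x:=\vec v\rangle)\Vdash B\}$, where $\vec t\langle x:=\vec w\rangle=\sum_j\beta_j\vec t[x:=w_j]$ and $\vec t\Vdash B$ means $\vec t$ evaluates (call-by-value, linearly) to some element of $[\![B]\!]$. A type $A$ is pure when $[\![A]\!]\subseteq\mathcal V$. *)

(* Defs.v *)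
From Stdlib Require Import Reals List Arith ClassicalEpsilon Relations.
From Coquelicot Require Import Coquelicot.

(* Pure values  v ::= x | \x.s | * | (v,w) | inl v | inr v
   Pure terms   t ::= v | t s | t;s | let (x,y)=t in s | match t {inl x => s1 | inr y => s2}
   Term distributions: formal C-combinations  t | 0 | a.s | s1 + s2  (modulo congruence). *)
Inductive val : Type :=
| VVar : nat -> val
| VLam : dist -> val              (* binds index 0 in the body *)
| VUnit : val
| VPair : val -> val -> val
| VInl : val -> val
| VInr : val -> val
with term : Type :=
| TVal : val -> term
| TApp : term -> term -> term
| TSeq : term -> dist -> term
| TLet : term -> dist -> term     (* let (x,y) = t in s : x is index 1, y is index 0 *)
| TMatch : term -> dist -> dist -> term  (* each branch binds index 0 *)
with dist : Type :=
| DT : term -> dist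
| DZero : dist
| DScal : C -> dist -> dist
| DAdd : dist -> dist -> dist.

Fixpoint lift_v (c : nat) (v : val) : val :=
  match v with
  | VVar n => if Nat.leb c n then VVar (S n) else VVar n
  | VLam d => VLam (lift_d (S c) d)
  | VUnit => VUnit
  | VPair v1 v2 => VPair (lift_v c v1) (lift_v c v2)
  | VInl v1 => VInl (lift_v c v1)
  | VInr v1 => VInr (lift_v c v1)
  end
with lift_t (c : nat) (t : term) : term :=
  match t with
  | TVal v => TVal (lift_v c v)
  | TApp t1 t2 => TApp (lift_t c t1) (lift_t c t2)
  | TSeq t1 d => TSeq (lift_t c t1) (lift_d c d)
  | TLet t1 d => TLet (lift_t c t1) (lift_d (S (S c)) d)
  | TMatch t1 d1 d2 => TMatch (lift_t c t1) (lift_d (S c) d1) (lift_d (S c) d2)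
  end
with lift_d (c : nat) (d : dist) : dist :=
  match d with
  | DT t => DT (lift_t c t)
  | DZero => DZero
  | DScal a d1 => DScal a (lift_d c d1)
  | DAdd d1 d2 => DAdd (lift_d c d1) (lift_d c d2)
  end.

Fixpoint subst_v (j : nat) (u : val) (v : val) : val :=
  match v with
  | VVar n => if Nat.eqb n j then u else if Nat.ltb j n then VVar (pred n) else VVar n
  | VLam d => VLam (subst_d (S j) (lift_v 0 u) d)
  | VUnit => VUnit
  | VPair v1 v2 => VPair (subst_v j u v1) (subst_v j u v2)
  | VInl v1 => VInl (subst_v j u v1)
  | VInr v1 => VInr (subst_v j u v1)
  end
with subst_t (j : nat) (u : val) (t : term) : term :=
  match t with
  | TVal v => TVal (subst_v j u v)
  | TApp t1 t2 => TApp (subst_t j u t1) (subst_t j u t2)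
  | TSeq t1 d => TSeq (subst_t j u t1) (subst_d j u d)
  | TLet t1 d => TLet (subst_t j u t1) (subst_d (S (S j)) (lift_v 0 (lift_v 0 u)) d)
  | TMatch t1 d1 d2 =>
      TMatch (subst_t j u t1) (subst_d (S j) (lift_v 0 u) d1) (subst_d (S j) (lift_v 0 u) d2)
  end
with subst_d (j : nat) (u : val) (d : dist) : dist :=
  match d with
  | DT t => DT (subst_t j u t)
  | DZero => DZero
  | DScal a d1 => DScal a (subst_d j u d1)
  | DAdd d1 d2 => DAdd (subst_d j u d1) (subst_d j u d2)
  end.

Fixpoint closed_v (n : nat) (v : val) : Prop :=
  match v with
  | VVar k => (k < n)%nat
  | VLam d => closed_d (S n) d
  | VUnit => True
  | VPair v1 v2 => closed_v n v1 /\ closed_v n v2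
  | VInl v1 => closed_v n v1
  | VInr v1 => closed_v n v1
  end
with closed_t (n : nat) (t : term) : Prop :=
  match t with
  | TVal v => closed_v n v
  | TApp t1 t2 => closed_t n t1 /\ closed_t n t2
  | TSeq t1 d => closed_t n t1 /\ closed_d n d
  | TLet t1 d => closed_t n t1 /\ closed_d (S (S n)) d
  | TMatch t1 d1 d2 => closed_t n t1 /\ closed_d (S n) d1 /\ closed_d (S n) d2
  end
with closed_d (n : nat) (d : dist) : Prop :=
  match d with
  | DT t => closed_t n t
  | DZero => True
  | DScal _ d1 => closed_d n d1
  | DAdd d1 d2 => closed_d n d1 /\ closed_d n d2
  end.

(* NB: there is no rule 0.t == 0. *)
Inductive veq : val -> val -> Prop :=
| veq_refl v : veq v v
| veq_sym v w : veq v w -> veq w v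
| veq_trans u v w : veq u v -> veq v w -> veq u w
| veq_lam d d' : deq d d' -> veq (VLam d) (VLam d')
| veq_pair v1 v2 w1 w2 : veq v1 w1 -> veq v2 w2 -> veq (VPair v1 v2) (VPair w1 w2)
| veq_inl v w : veq v w -> veq (VInl v) (VInl w)
| veq_inr v w : veq v w -> veq (VInr v) (VInr w)
with teq : term -> term -> Prop :=
| teq_refl t : teq t t
| teq_sym t s : teq t s -> teq s t
| teq_trans t s r : teq t s -> teq s r -> teq t r
| teq_val v w : veq v w -> teq (TVal v) (TVal w)
| teq_app t1 t2 s1 s2 : teq t1 s1 -> teq t2 s2 -> teq (TApp t1 t2) (TApp s1 s2)
| teq_seq t s d e : teq t s -> deq d e -> teq (TSeq t d) (TSeq s e)
| teq_let t s d e : teq t s -> deq d e -> teq (TLet t d) (TLet s e)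
| teq_match t s d1 e1 d2 e2 : teq t s -> deq d1 e1 -> deq d2 e2 ->
    teq (TMatch t d1 d2) (TMatch s e1 e2)
with deq : dist -> dist -> Prop :=
| deq_refl d : deq d d
| deq_sym d e : deq d e -> deq e d
| deq_trans d e f : deq d e -> deq e f -> deq d f
| deq_T t s : teq t s -> deq (DT t) (DT s)
| deq_scal_cong a d e : deq d e -> deq (DScal a d) (DScal a e)
| deq_add_cong d1 d2 e1 e2 : deq d1 e1 -> deq d2 e2 -> deq (DAdd d1 d2) (DAdd e1 e2)
| deq_comm d e : deq (DAdd d e) (DAdd e d)
| deq_assoc d e f : deq (DAdd (DAdd d e) f) (DAdd d (DAdd e f))
| deq_add_zero d : deq (DAdd d DZero) d
| deq_one d : deq (DScal (RtoC 1) d) d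
| deq_scal_scal a b d : deq (DScal a (DScal b d)) (DScal (Cmult a b) d)
| deq_scal_distr a b d : deq (DScal (Cplus a b) d) (DAdd (DScal a d) (DScal b d))
| deq_distr_scal a d e : deq (DScal a (DAdd d e)) (DAdd (DScal a d) (DScal a e))
| deq_scal_zero a : deq (DScal a DZero) DZero.

Fixpoint dmap (f : term -> term) (d : dist) : dist :=
  match d with
  | DT t => DT (f t)
  | DZero => DZero
  | DScal a d1 => DScal a (dmap f d1)
  | DAdd d1 d2 => DAdd (dmap f d1) (dmap f d2)
  end.

Fixpoint dbind (f : term -> dist) (d : dist) : dist :=
  match d with
  | DT t => f t
  | DZero => DZero
  | DScal a d1 => DScal a (dbind f d1)
  | DAdd d1 d2 => DAdd (dbind f d1) (dbind f d2)
  end.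

Definition dinl (d : dist) : dist :=
  dmap (fun t => match t with TVal v => TVal (VInl v) | _ => t end) d.
Definition dinr (d : dist) : dist :=
  dmap (fun t => match t with TVal v => TVal (VInr v) | _ => t end) d.
Definition dpair (d1 d2 : dist) : dist :=
  dbind (fun t1 => match t1 with
                   | TVal v => dmap (fun t2 => match t2 with
                                               | TVal w => TVal (VPair v w)
                                               | _ => t2 end) d2
                   | _ => DZero end) d1.

(* body<x := sum_j b_j w_j>  =  sum_j b_j body[x := w_j] *)
Definition dsubst (body : dist) (vd : dist) : dist :=
  dbind (fun t => match t with TVal w => subst_d 0 w body | _ => DZero end) vd.

Definition dsum_t (l : list (C * term)) : dist :=
  fold_right (fun p acc => DAdd (DScal (fst p) (DT (snd p))) acc) DZero l.
Definition dsum_d (l : list (C * dist)) : dist :=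
  fold_right (fun p acc => DAdd (DScal (fst p) (snd p)) acc) DZero l.

Fixpoint canon (l : list (C * term)) : Prop :=
  match l with
  | nil => True
  | p :: l' => (forall q, In q l' -> ~ teq (snd p) (snd q)) /\ canon l'
  end.

Definition dom (d : dist) (t : term) : Prop :=
  exists l, canon l /\ deq d (dsum_t l) /\ exists p, In p l /\ teq t (snd p).

Definition delta (t s : term) : C :=
  if excluded_middle_informative (teq t s) then RtoC 1 else RtoC 0.
Definition ip (l1 l2 : list (C * term)) : C :=
  fold_right Cplus (RtoC 0)
    (map (fun p => fold_right Cplus (RtoC 0)
                     (map (fun q => Cmult (Cmult (Cconj (fst p)) (fst q)) (delta (snd p) (snd q))) l2))
         l1).

Definition in_sphere (d : dist) : Prop :=
  exists l, deq d (dsum_t l) /\ ip l l = RtoC 1.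

Definition in_span (X : dist -> Prop) (d : dist) : Prop :=
  exists l : list (C * dist), (forall p, In p l -> X (snd p)) /\ deq d (dsum_d l).

Inductive tstep : term -> dist -> Prop :=
| st_beta b v : tstep (TApp (TVal (VLam b)) (TVal v)) (subst_d 0 v b)
| st_seq s : tstep (TSeq (TVal VUnit) s) s
| st_let v w s : tstep (TLet (TVal (VPair v w)) s) (subst_d 0 v (subst_d 0 (lift_v 0 w) s))
| st_inl v s1 s2 : tstep (TMatch (TVal (VInl v)) s1 s2) (subst_d 0 v s1)
| st_inr v s1 s2 : tstep (TMatch (TVal (VInr v)) s1 s2) (subst_d 0 v s2)
| st_app_r s t t' : tstep t t' -> tstep (TApp s t) (dmap (TApp s) t')
| st_app_l s s' v : tstep s s' -> tstep (TApp s (TVal v)) (dmap (fun s0 => TApp s0 (TVal v)) s')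
| st_seq_ctx t t' s : tstep t t' -> tstep (TSeq t s) (dmap (fun t0 => TSeq t0 s) t')
| st_let_ctx t t' s : tstep t t' -> tstep (TLet t s) (dmap (fun t0 => TLet t0 s) t')
| st_match_ctx t t' s1 s2 : tstep t t' ->
    tstep (TMatch t s1 s2) (dmap (fun t0 => TMatch t0 s1 s2) t').

Definition dstep (d d' : dist) : Prop :=
  exists a t r t', tstep t t' /\ deq d (DAdd (DScal a (DT t)) r) /\ ~ dom r t /\
                   d' = DAdd (DScal a t') r.

Definition reds : dist -> dist -> Prop :=
  clos_refl_trans dist (fun d e => dstep d e \/ deq d e).

Inductive ty : Type :=
| TyU : ty
| TyFlat : ty -> ty
| TySharp : ty -> ty
| TySum : ty -> ty -> ty
| TyProd : ty -> ty -> ty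
| TyArr : ty -> ty -> ty      (* A -> B *)
| TyArrL : ty -> ty -> ty.    (* A => B *)

Fixpoint sem (A : ty) : dist -> Prop :=
  match A with
  | TyU => fun d => deq d (DT (TVal VUnit))
  | TyFlat A1 => fun d => exists d', sem A1 d' /\ exists t, dom d' t /\ deq d (DT t)
  | TySharp A1 => fun d => in_span (sem A1) d /\ in_sphere d
  | TySum A1 A2 => fun d =>
      (exists d', sem A1 d' /\ deq d (dinl d')) \/ (exists d', sem A2 d' /\ deq d (dinr d'))
  | TyProd A1 A2 => fun d =>
      exists d1 d2, sem A1 d1 /\ sem A2 d2 /\ deq d (dpair d1 d2)
  | TyArr A1 A2 => fun d =>
      exists b, closed_v 0 (VLam b) /\ deq d (DT (TVal (VLam b))) /\
        forall vd, sem A1 vd -> exists w, reds (dsubst b vd) w /\ sem A2 w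
  | TyArrL A1 A2 => fun d =>
      exists l : list (C * dist),
        (forall p, In p l -> closed_v 0 (VLam (snd p))) /\
        deq d (dsum_d (map (fun p => (fst p, DT (TVal (VLam (snd p))))) l)) /\
        in_sphere d /\
        forall vd, sem A1 vd ->
          exists w, reds (dsum_d (map (fun p => (fst p, dsubst (snd p) vd)) l)) w /\ sem A2 w
  end.

Definition pure (A : ty) : Prop :=
  forall d, sem A d -> exists v, closed_v 0 v /\ deq d (DT (TVal v)).

(* Main.v *)
Require Import Defs.
From Stdlib Require Import Reals Lra List Relations ClassicalEpsilon.
From Coquelicot Require Import Coquelicot.

Lemma teq_TVal_inv : forall t s, teq t s ->
  (forall u, t = TVal u -> exists w, s = TVal w /\ veq u w) /\
  (forall w, s = TVal w -> exists u, t = TVal u /\ veq u w).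
Proof.
  intros t s H; induction H.
  - split; intros; subst; eexists; split; eauto using veq_refl.
  - destruct IHteq as [H1 H2]; split; intros u E.
    + destruct (H2 u E) as [x [? ?]]; eauto using veq_sym.
    + destruct (H1 u E) as [x [? ?]]; eauto using veq_sym.
  - destruct IHteq1 as [H1 H2], IHteq2 as [H3 H4]; split; intros u E.
    + destruct (H1 u E) as [x [E2 ?]]; destruct (H3 x E2) as [y [? ?]]; eauto using veq_trans.
    + destruct (H4 u E) as [x [E2 ?]]; destruct (H2 x E2) as [y [? ?]]; eauto using veq_trans.
  - split; intros u E; inversion E; subst; eauto.
  - split; intros; discriminate.
  - split; intros; discriminate.
  - split; intros; discriminate.
  - split; intros; discriminate.
Qed.

Lemma veq_lam_inv : forall v w, veq v w ->
  (forall d, v = VLam d -> exists e, w = VLam e /\ deq d e) /\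
  (forall e, w = VLam e -> exists d, v = VLam d /\ deq d e).
Proof.
  intros v w H; induction H.
  - split; intros; subst; eexists; split; eauto using deq_refl.
  - destruct IHveq as [H1 H2]; split; intros x0 E.
    + destruct (H2 x0 E) as [x [? ?]]; eauto using deq_sym.
    + destruct (H1 x0 E) as [x [? ?]]; eauto using deq_sym.
  - destruct IHveq1 as [H1 H2], IHveq2 as [H3 H4]; split; intros x0 E.
    + destruct (H1 x0 E) as [x [E2 ?]]; destruct (H3 x E2) as [y [? ?]]; eauto using deq_trans.
    + destruct (H4 x0 E) as [x [E2 ?]]; destruct (H2 x E2) as [y [? ?]]; eauto using deq_trans.
  - split; intros x0 E; inversion E; subst; eauto.
  - split; intros; discriminate.
  - split; intros; discriminate.
  - split; intros; discriminate.
Qed.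

Fixpoint In_supp (t : term) (d : Defs.dist) : Prop :=
  match d with
  | DT s => s = t
  | DZero => False
  | DScal _ d1 => In_supp t d1
  | DAdd d1 d2 => In_supp t d1 \/ In_supp t d2
  end.

Lemma supp_deq : forall d e, deq d e ->
  (forall t, In_supp t d -> exists s, In_supp s e /\ teq t s) /\
  (forall t, In_supp t e -> exists s, In_supp s d /\ teq t s).
Proof.
  intros d e H; induction H; simpl in *;
  try solve [firstorder eauto using teq_refl, teq_sym, teq_trans].
  split; intros; subst; eexists; split; eauto using teq_sym.
Qed.

Lemma delta_teq : forall t t' s, teq t t' -> delta t s = delta t' s.
Proof.
  intros. unfold delta.
  destruct (excluded_middle_informative (teq t s)), (excluded_middle_informative (teq t' s)); auto.
  - exfalso; eauto using teq_trans, teq_sym.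
  - exfalso; eauto using teq_trans, teq_sym.
Qed.

Lemma delta_sym : forall t s, delta t s = delta s t.
Proof.
  intros. unfold delta.
  destruct (excluded_middle_informative (teq t s)), (excluded_middle_informative (teq s t)); auto;
  exfalso; eauto using teq_sym.
Qed.

Lemma delta_refl : forall t, delta t t = RtoC 1.
Proof. intros; unfold delta; destruct (excluded_middle_informative (teq t t)); auto.
  exfalso; apply n, teq_refl. Qed.

Lemma delta_01 : forall t s, delta t s = RtoC 1 \/ delta t s = RtoC 0.
Proof. intros; unfold delta; destruct (excluded_middle_informative (teq t s)); auto. Qed.

Fixpoint coef (s : term) (d : Defs.dist) : C :=
  match d with
  | DT t => delta t s
  | DZero => RtoC 0
  | DScal a d1 => Cmult a (coef s d1)
  | DAdd d1 d2 => Cplus (coef s d1) (coef s d2)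
  end.

Lemma coef_deq : forall d e, deq d e -> forall s, coef s d = coef s e.
Proof.
  intros d e H; induction H; intros x; simpl; try ring;
  try congruence.
  all: try (apply delta_teq; auto).
  all: try (rewrite IHdeq; ring).
  all: try (rewrite IHdeq1, IHdeq2; ring).
  all: try (rewrite IHdeq1; auto).
Qed.

Lemma supp_dsum_d : forall l t, In_supp t (dsum_d l) -> exists p, In p l /\ In_supp t (snd p).
Proof.
  induction l as [|p l IH]; simpl; intros t H; [contradiction|].
  destruct H as [H|H]; [exists p; auto|].
  destruct (IH t H) as [q [? ?]]; eauto.
Qed.

Lemma supp_dsum_t_in : forall l p, In p l -> In_supp (snd p) (dsum_t l).
Proof.
  induction l as [|q l IH]; simpl; intros p H; [contradiction|].
  destruct H as [H|H]; [subst; auto|right; auto].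
Qed.

Lemma supp_dsum_d_in : forall l p t, In p l -> In_supp t (snd p) -> In_supp t (dsum_d l).
Proof.
  induction l as [|q l IH]; simpl; intros p t H H'; [contradiction|].
  destruct H as [H|H]; [subst; auto|right; eauto].
Qed.

Lemma supp_dmap : forall f d t, In_supp t (dmap f d) -> exists t0, In_supp t0 d /\ t = f t0.
Proof.
  induction d; simpl; intros; try contradiction; eauto.
  destruct H as [H|H]; [destruct (IHd1 t H)|destruct (IHd2 t H)]; firstorder.
Qed.

Lemma supp_dbind : forall f d t, In_supp t (dbind f d) -> exists t0, In_supp t0 d /\ In_supp t (f t0).
Proof.
  induction d; simpl; intros; try contradiction; eauto.
  destruct H as [H|H]; [destruct (IHd1 t H)|destruct (IHd2 t H)]; firstorder.
Qed.

Lemma dmap_cong : forall f, (forall t s, teq t s -> teq (f t) (f s)) ->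
  forall d e, deq d e -> deq (dmap f d) (dmap f e).
Proof.
  intros f Hf d e H; induction H; simpl; eauto using deq.
Qed.

Lemma dbind_cong : forall f, (forall t s, teq t s -> deq (f t) (f s)) ->
  forall d e, deq d e -> deq (dbind f d) (dbind f e).
Proof.
  intros f Hf d e H; induction H; simpl; eauto using deq.
Qed.

Lemma dmap_ext : forall f g, (forall t, teq (f t) (g t)) -> forall d, deq (dmap f d) (dmap g d).
Proof.
  intros f g Hf d; induction d; simpl; eauto using deq.
Qed.

Definition Good (d : Defs.dist) : Prop :=
  forall t, In_supp t d -> exists v, closed_v 0 v /\ teq t (TVal v).

Lemma Good_deq : forall d e, deq d e -> Good e -> Good d.
Proof.
  intros d e H G t Ht.
  destruct (proj1 (supp_deq d e H) t Ht) as [s [Hs Hts]].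
  destruct (G s Hs) as [v [? ?]]; eauto using teq_trans.
Qed.

Lemma Good_dsum_d : forall l, (forall p, In p l -> Good (snd p)) -> Good (dsum_d l).
Proof.
  intros l H t Ht. destruct (supp_dsum_d l t Ht) as [p [? ?]]. eapply H; eauto.
Qed.

Lemma teq_TVal_l : forall u t, teq (TVal u) t -> exists w, t = TVal w /\ veq u w.
Proof. intros. exact (proj1 (teq_TVal_inv _ _ H) u eq_refl). Qed.

Lemma dom_good : forall d t, Good d -> dom d t -> exists v, closed_v 0 v /\ teq t (TVal v).
Proof.
  intros d t G [l [_ [Hd [p [Hp Ht]]]]].
  pose proof (supp_dsum_t_in l p Hp) as Hs.
  destruct (proj2 (supp_deq _ _ Hd) _ Hs) as [s [Hs' Hts]].
  destruct (G s Hs') as [v [? ?]]; eauto using teq_trans.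
Qed.

Lemma sem_good : forall A d, sem A d -> Good d.
Proof.
  induction A; simpl; intros d H.
  - eapply Good_deq; eauto. intros t Ht; simpl in Ht; subst. exists VUnit; simpl; split; auto using teq_refl.
  - destruct H as [d' [Hd' [t [Hdom Hd]]]].
    destruct (dom_good d' t (IHA _ Hd') Hdom) as [v [? ?]].
    eapply Good_deq; eauto. intros s Hs; simpl in Hs; subst; eauto.
  - destruct H as [[l [Hl Hd]] _]. eapply Good_deq; eauto.
    apply Good_dsum_d; intros; auto.
  - destruct H as [[d' [Hd' Hd]]|[d' [Hd' Hd]]]; eapply Good_deq; eauto;
    intros t Ht; destruct (supp_dmap _ _ _ Ht) as [t0 [Ht0 E]]; subst.
    + destruct (IHA1 _ Hd' t0 Ht0) as [v [Hv Hq]].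
      destruct t0; try solve [eauto].
      destruct (teq_TVal_l _ _ Hq) as [w [E Hw]]; injection E as E; subst w.
      exists (VInl v); simpl; split; auto. apply teq_val, veq_inl; auto.
    + destruct (IHA2 _ Hd' t0 Ht0) as [v [Hv Hq]].
      destruct t0; try solve [eauto].
      destruct (teq_TVal_l _ _ Hq) as [w [E Hw]]; injection E as E; subst w.
      exists (VInr v); simpl; split; auto. apply teq_val, veq_inr; auto.
  - destruct H as [d1 [d2 [H1 [H2 Hd]]]]. eapply Good_deq; eauto.
    intros t Ht; unfold dpair in Ht. destruct (supp_dbind _ _ _ Ht) as [t1 [Ht1 Ht']].
    destruct t1; simpl in Ht'; try contradiction.
    destruct (supp_dmap _ _ _ Ht') as [t2 [Ht2 E]]; subst.
    destruct (IHA1 _ H1 _ Ht1) as [v1 [Hv1 Hq1]].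
    destruct (IHA2 _ H2 _ Ht2) as [v2 [Hv2 Hq2]].
    destruct t2; try solve [eauto].
    destruct (teq_TVal_l _ _ Hq1) as [w1 [E1 Hw1]]; injection E1 as E1; subst w1.
    destruct (teq_TVal_l _ _ Hq2) as [w2 [E2 Hw2]]; injection E2 as E2; subst w2.
    exists (VPair v1 v2); simpl; split; auto. apply teq_val, veq_pair; auto.
  - destruct H as [b [Hc [Hd _]]]. eapply Good_deq; eauto.
    intros t Ht; simpl in Ht; subst; eauto using teq_refl.
    exists (VLam b); simpl; split; auto using teq_refl.
  - destruct H as [l [Hc [Hd _]]]. eapply Good_deq; eauto.
    apply Good_dsum_d; intros p Hp. apply in_map_iff in Hp as [q [E Hq]]; subst; simpl.
    intros t Ht; simpl in Ht; subst. exists (VLam (snd q)); split; auto using teq_refl.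
    simpl; auto.
Qed.

Lemma pure_U : pure TyU.
Proof. intros d H; simpl in H. exists VUnit; simpl; auto. Qed.

Lemma pure_Flat : forall A, pure (TyFlat A).
Proof.
  intros A d [d' [Hd' [t [Hdom Hd]]]].
  destruct (dom_good d' t (sem_good A d' Hd') Hdom) as [v [? ?]].
  exists v; split; auto. eapply deq_trans; [exact Hd|]. apply deq_T; auto.
Qed.

Lemma pure_Arr : forall A B, pure (TyArr A B).
Proof.
  intros A B d [b [Hc [Hd _]]]. exists (VLam b); auto.
Qed.

Definition finl (t : term) := match t with TVal v => TVal (VInl v) | _ => t end.
Definition finr (t : term) := match t with TVal v => TVal (VInr v) | _ => t end.

Lemma teq_TVal_r : forall u t, teq t (TVal u) -> exists w, t = TVal w /\ veq w u.
Proof. intros. exact (proj2 (teq_TVal_inv _ _ H) u eq_refl). Qed.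

Lemma finl_cong : forall t s, teq t s -> teq (finl t) (finl s).
Proof.
  intros t s H. destruct t.
  - destruct (teq_TVal_l _ _ H) as [w [E Hw]]; subst; simpl. apply teq_val, veq_inl; auto.
  - destruct s; simpl; auto. destruct (teq_TVal_r _ _ H) as [w [E _]]; discriminate.
  - destruct s; simpl; auto. destruct (teq_TVal_r _ _ H) as [w [E _]]; discriminate.
  - destruct s; simpl; auto. destruct (teq_TVal_r _ _ H) as [w [E _]]; discriminate.
  - destruct s; simpl; auto. destruct (teq_TVal_r _ _ H) as [w [E _]]; discriminate.
Qed.

Lemma finr_cong : forall t s, teq t s -> teq (finr t) (finr s).
Proof.
  intros t s H. destruct t.
  - destruct (teq_TVal_l _ _ H) as [w [E Hw]]; subst; simpl. apply teq_val, veq_inr; auto.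
  - destruct s; simpl; auto. destruct (teq_TVal_r _ _ H) as [w [E _]]; discriminate.
  - destruct s; simpl; auto. destruct (teq_TVal_r _ _ H) as [w [E _]]; discriminate.
  - destruct s; simpl; auto. destruct (teq_TVal_r _ _ H) as [w [E _]]; discriminate.
  - destruct s; simpl; auto. destruct (teq_TVal_r _ _ H) as [w [E _]]; discriminate.
Qed.

Definition fpair (v : val) (t : term) := match t with TVal w => TVal (VPair v w) | _ => t end.

Lemma fpair_cong : forall v t s, teq t s -> teq (fpair v t) (fpair v s).
Proof.
  intros v t s H. destruct t.
  - destruct (teq_TVal_l _ _ H) as [w [E Hw]]; subst; simpl. apply teq_val, veq_pair; auto using veq_refl.
  - destruct s; simpl; auto. destruct (teq_TVal_r _ _ H) as [w [E _]]; discriminate.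
  - destruct s; simpl; auto. destruct (teq_TVal_r _ _ H) as [w [E _]]; discriminate.
  - destruct s; simpl; auto. destruct (teq_TVal_r _ _ H) as [w [E _]]; discriminate.
  - destruct s; simpl; auto. destruct (teq_TVal_r _ _ H) as [w [E _]]; discriminate.
Qed.

Definition gpair (d2 : Defs.dist) (t : term) :=
  match t with TVal v => dmap (fpair v) d2 | _ => DZero end.

Lemma gpair_cong : forall d2 t s, teq t s -> deq (gpair d2 t) (gpair d2 s).
Proof.
  intros d2 t s H. destruct t.
  - destruct (teq_TVal_l _ _ H) as [w [E Hw]]; subst; simpl.
    apply dmap_ext. intros x; destruct x; simpl; try apply teq_refl.
    apply teq_val, veq_pair; auto using veq_refl.
  - destruct s; simpl; try apply deq_refl. destruct (teq_TVal_r _ _ H) as [w [E _]]; discriminate.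
  - destruct s; simpl; try apply deq_refl. destruct (teq_TVal_r _ _ H) as [w [E _]]; discriminate.
  - destruct s; simpl; try apply deq_refl. destruct (teq_TVal_r _ _ H) as [w [E _]]; discriminate.
  - destruct s; simpl; try apply deq_refl. destruct (teq_TVal_r _ _ H) as [w [E _]]; discriminate.
Qed.

Lemma pure_Sum : forall A B, pure A -> pure B -> pure (TySum A B).
Proof.
  intros A B HA HB d [[d' [Hd' Hd]]|[d' [Hd' Hd]]].
  - destruct (HA d' Hd') as [v [Hv Hq]]. exists (VInl v); simpl; split; auto.
    eapply deq_trans; [exact Hd|]. unfold dinl.
    change (deq (dmap finl d') (dmap finl (DT (TVal v)))).
    apply dmap_cong; auto using finl_cong.
  - destruct (HB d' Hd') as [v [Hv Hq]]. exists (VInr v); simpl; split; auto.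
    eapply deq_trans; [exact Hd|]. unfold dinr.
    change (deq (dmap finr d') (dmap finr (DT (TVal v)))).
    apply dmap_cong; auto using finr_cong.
Qed.

Lemma pure_Prod : forall A B, pure A -> pure B -> pure (TyProd A B).
Proof.
  intros A B HA HB d [d1 [d2 [H1 [H2 Hd]]]].
  destruct (HA d1 H1) as [v1 [Hv1 Hq1]].
  destruct (HB d2 H2) as [v2 [Hv2 Hq2]].
  exists (VPair v1 v2); simpl; split; auto.
  eapply deq_trans; [exact Hd|]. unfold dpair.
  change (deq (dbind (gpair d2) d1) (DT (TVal (VPair v1 v2)))).
  eapply deq_trans. apply dbind_cong; [apply gpair_cong|exact Hq1].
  simpl. change (deq (dmap (fpair v1) d2) (dmap (fpair v1) (DT (TVal v2)))).
  apply dmap_cong; auto using fpair_cong.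
Qed.

Lemma scal_dsum_d : forall c l, deq (DScal c (dsum_d l))
  (dsum_d (map (fun p => (Cmult c (fst p), snd p)) l)).
Proof.
  induction l as [|p l IH]; simpl.
  - apply deq_scal_zero.
  - eapply deq_trans; [apply deq_distr_scal|].
    apply deq_add_cong; auto. apply deq_scal_scal.
Qed.

Lemma C_neq_fst : forall x y : C, fst x <> fst y -> x <> y.
Proof. intros x y H E; subst; auto. Qed.

Lemma npure_Sharp : forall A, (exists d, sem (TySharp A) d) -> ~ pure (TySharp A).
Proof.
  intros A [d Hd] Hp.
  destruct (Hp d Hd) as [v [Hv Hq]].
  destruct Hd as [[l [Hl Hdl]] _].
  set (d' := DScal (RtoC (-1)) d).
  assert (Hd' : sem (TySharp A) d').
  { simpl; split.
    - exists (map (fun p => (Cmult (RtoC (-1)) (fst p), snd p)) l); split.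
      + intros p Hp'. apply in_map_iff in Hp' as [q [E Hq']]; subst; simpl; auto.
      + eapply deq_trans; [apply deq_scal_cong; exact Hdl|]. apply scal_dsum_d.
    - exists ((RtoC (-1), TVal v) :: nil); split.
      + simpl. eapply deq_trans; [apply deq_scal_cong; exact Hq|]. apply deq_sym, deq_add_zero.
      + unfold ip; simpl. rewrite delta_refl.
        apply injective_projections; simpl; lra. }
  destruct (Hp d' Hd') as [w [_ Hw]].
  pose proof (coef_deq _ _ Hw (TVal v)) as E.
  pose proof (coef_deq _ _ Hq (TVal v)) as E2.
  unfold d' in E; simpl in E, E2. rewrite E2, delta_refl in E.
  destruct (delta_01 (TVal w) (TVal v)) as [E3|E3]; rewrite E3 in E;
  apply (f_equal fst) in E; simpl in E; lra.
Qed.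

Definition sumC (l : list (C * Defs.dist)) : C := fold_right (fun p acc => Cplus (fst p) acc) (RtoC 0) l.

Lemma dsum_d_cong2 : forall (l : list (C * Defs.dist)) (a : C * Defs.dist -> C) f g, (forall p, In p l -> deq (f p) (g p)) ->
  deq (dsum_d (map (fun p => (a p, f p)) l)) (dsum_d (map (fun p => (a p, g p)) l)).
Proof.
  induction l as [|p l IH]; simpl; intros a f g H; [apply deq_refl|].
  apply deq_add_cong; [apply deq_scal_cong; auto|auto].
Qed.

Lemma dsum_d_cong : forall (l : list (C * Defs.dist)) f g, (forall p, In p l -> deq (f p) (g p)) ->
  deq (dsum_d (map (fun p => (fst p, f p)) l)) (dsum_d (map (fun p => (fst p, g p)) l)).
Proof.
  induction l as [|p l IH]; simpl; intros f g H; [apply deq_refl|].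
  apply deq_add_cong; [apply deq_scal_cong; auto|auto].
Qed.

Lemma dsum_const : forall (l : list (C * Defs.dist)) X, l <> nil ->
  deq (dsum_d (map (fun p => (fst p, X)) l)) (DScal (sumC l) X).
Proof.
  induction l as [|p l IH]; intros X Hn; [congruence|].
  destruct l as [|q l].
  - simpl. eapply deq_trans; [apply deq_add_zero|]. replace (Cplus (fst p) (RtoC 0)) with (fst p) by ring.
    apply deq_refl.
  - change (deq (DAdd (DScal (fst p) X) (dsum_d (map (fun p => (fst p, X)) (q :: l))))
               (DScal (Cplus (fst p) (sumC (q :: l))) X)).
    eapply deq_trans; [apply deq_add_cong; [apply deq_refl|apply IH; congruence]|].
    apply deq_sym, deq_scal_distr.
Qed.

Lemma dsum_d_app : forall l1 l2, deq (dsum_d (l1 ++ l2)) (DAdd (dsum_d l1) (dsum_d l2)).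
Proof.
  induction l1 as [|p l1 IH]; simpl; intros.
  - eapply deq_trans; [apply deq_sym, deq_add_zero|]. apply deq_comm.
  - eapply deq_trans; [apply deq_add_cong; [apply deq_refl|apply IH]|].
    apply deq_sym, deq_assoc.
Qed.

Lemma dsum_inner_scal : forall (l : list (C * Defs.dist)) (a : C * Defs.dist -> C) c f,
  deq (dsum_d (map (fun p => (a p, DScal c (f p))) l)) (DScal c (dsum_d (map (fun p => (a p, f p)) l))).
Proof.
  induction l as [|p l IH]; simpl; intros.
  - apply deq_sym, deq_scal_zero.
  - eapply deq_trans; [|apply deq_sym, deq_distr_scal].
    apply deq_add_cong; auto.
    eapply deq_trans; [apply deq_scal_scal|].
    eapply deq_trans; [|apply deq_sym, deq_scal_scal].
    replace (Cmult (a p) c) with (Cmult c (a p)) by ring. apply deq_refl.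
Qed.

Lemma dbind_scal : forall g f c, (forall t, deq (g t) (DScal c (f t))) ->
  forall d, deq (dbind g d) (DScal c (dbind f d)).
Proof.
  intros g f c H d; induction d; simpl; auto.
  - apply deq_sym, deq_scal_zero.
  - eapply deq_trans; [apply deq_scal_cong; exact IHd|].
    eapply deq_trans; [apply deq_scal_scal|].
    eapply deq_trans; [|apply deq_sym, deq_scal_scal].
    replace (Cmult c0 c) with (Cmult c c0) by ring. apply deq_refl.
  - eapply deq_trans; [|apply deq_sym, deq_distr_scal]. apply deq_add_cong; auto.
Qed.

Lemma dsubst_scal : forall c b vd, deq (dsubst (DScal c b) vd) (DScal c (dsubst b vd)).
Proof.
  intros. unfold dsubst. apply dbind_scal.
  intros t; destruct t; simpl; try apply deq_refl; apply deq_sym, deq_scal_zero.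
Qed.

Definition alpha : C := (/2, /2)%R.
Definition beta : C := (-/2, /2)%R.
Definition m1 : C := RtoC (-1).

Lemma lam_inv : forall b1 v, teq (TVal (VLam b1)) (TVal v) -> exists b, v = VLam b /\ deq b1 b.
Proof.
  intros b1 v H. destruct (teq_TVal_l _ _ H) as [w [E Hw]]. injection E as E; subst w.
  destruct (proj1 (veq_lam_inv _ _ Hw) b1 eq_refl) as [e [E He]]. eauto.
Qed.

Lemma npure_ArrL : forall A B, (exists d, sem (TyArrL A B) d) -> ~ pure (TyArrL A B).
Proof.
  intros A B [d Hd] Hp.
  destruct (Hp d Hd) as [v [Hv Hq]].
  destruct Hd as [l [Hc [Hdl [_ Hred]]]].
  set (D := dsum_d (map (fun p => (fst p, DT (TVal (VLam (snd p))))) l)) in *.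
  assert (HqD : deq D (DT (TVal v))) by eauto using deq_trans, deq_sym.
  assert (Hmem : forall p, In p l -> teq (TVal (VLam (snd p))) (TVal v)).
  { intros p Hpl.
    assert (Hs : In_supp (TVal (VLam (snd p))) D).
    { eapply supp_dsum_d_in. apply in_map_iff. exists p; split; [reflexivity|exact Hpl]. simpl; auto. }
    destruct (proj1 (supp_deq _ _ HqD) _ Hs) as [s [Hs' Hts]]. simpl in Hs'; subst; auto. }
  assert (Hex : exists p0, In p0 l).
  { destruct l as [|p0 l0]; [|exists p0; left; auto].
    destruct (proj2 (supp_deq _ _ HqD) (TVal v) eq_refl) as [s [Hs _]]. simpl in Hs. contradiction. }
  destruct Hex as [p0 Hp0].
  assert (Hne : l <> nil) by (intro E; rewrite E in Hp0; contradiction).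
  destruct (lam_inv _ _ (Hmem p0 Hp0)) as [b [Ev _]]. subst v.
  assert (HbAll : forall p, In p l -> deq (snd p) b).
  { intros p Hpl. destruct (lam_inv _ _ (Hmem p Hpl)) as [b' [E Hb']]. injection E as E; subst; auto. }
  set (S := sumC l).
  assert (HD : deq D (DScal S (DT (TVal (VLam b))))).
  { unfold D. eapply deq_trans; [|apply (dsum_const l (DT (TVal (VLam b))) Hne)].
    apply (dsum_d_cong l (fun p => DT (TVal (VLam (snd p)))) (fun _ => DT (TVal (VLam b)))).
    intros p Hpl. apply deq_T, teq_val, veq_lam; auto. }
  assert (HS : S = RtoC 1).
  { pose proof (coef_deq _ _ (deq_trans _ _ _ (deq_sym _ _ HD) HqD) (TVal (VLam b))) as E.
    simpl in E. rewrite delta_refl in E. rewrite <- E. ring. }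
  set (t1 := TVal (VLam b)). set (t2 := TVal (VLam (DScal m1 b))).
  set (D' := dsum_d (map (fun p => (fst p, DT (TVal (VLam (DScal m1 (snd p)))))) l)).
  assert (HD' : deq D' (DT t2)).
  { unfold D'. eapply deq_trans; [|apply deq_one]. rewrite <- HS.
    eapply deq_trans; [|apply (dsum_const l (DT t2) Hne)].
    apply (dsum_d_cong l (fun p => DT (TVal (VLam (DScal m1 (snd p))))) (fun _ => DT t2)).
    intros p Hpl. apply deq_T, teq_val, veq_lam, deq_scal_cong; auto. }
  set (l' := map (fun p => (Cmult alpha (fst p), snd p)) l ++
             map (fun p => (Cmult beta (fst p), DScal m1 (snd p))) l).
  set (d' := dsum_d (map (fun p => (fst p, DT (TVal (VLam (snd p))))) l')).
  assert (Hd'2 : deq d' (DAdd (DScal alpha (DT t1)) (DScal beta (DT t2)))).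
  { unfold d', l'. rewrite map_app. eapply deq_trans; [apply dsum_d_app|].
    rewrite !map_map. simpl. apply deq_add_cong.
    - eapply deq_trans; [|apply deq_scal_cong; apply HqD].
      unfold D. eapply deq_trans; [|apply deq_sym, scal_dsum_d]. rewrite map_map; simpl. apply deq_refl.
    - eapply deq_trans; [|apply deq_scal_cong; apply HD'].
      unfold D'. eapply deq_trans; [|apply deq_sym, scal_dsum_d]. rewrite map_map; simpl. apply deq_refl. }
  assert (Hsem : sem (TyArrL A B) d').
  { simpl. exists l'. split; [|split; [apply deq_refl|split]].
    - intros p Hpl. unfold l' in Hpl. apply in_app_or in Hpl as [Hpl|Hpl];
      apply in_map_iff in Hpl as [q [E Hq']]; subst; simpl; apply (Hc q Hq').
    - exists ((alpha, t1) :: (beta, t2) :: nil). split.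
      + eapply deq_trans; [exact Hd'2|]. simpl. apply deq_add_cong; [apply deq_refl|].
        apply deq_sym, deq_add_zero.
      + unfold ip; simpl. rewrite !delta_refl. rewrite (delta_sym t2 t1).
        destruct (delta_01 t1 t2) as [E|E]; rewrite E; unfold alpha, beta;
        apply injective_projections; simpl; lra.
    - intros vd Hvd. destruct (Hred vd Hvd) as [w [Hr Hw]]. exists w; split; auto.
      eapply rt_trans; [apply rt_step; right|exact Hr].
      set (S0 := dsum_d (map (fun p => (fst p, dsubst (snd p) vd)) l)).
      unfold l'. rewrite map_app. eapply deq_trans; [apply dsum_d_app|].
      rewrite !map_map; simpl.
      apply deq_trans with (e := DAdd (DScal alpha S0) (DScal m1 (DScal beta S0))).
      { apply deq_add_cong.
        - apply deq_sym. eapply deq_trans; [apply (scal_dsum_d alpha (map (fun p => (fst p, dsubst (snd p) vd)) l))|].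
          rewrite map_map; simpl. apply deq_refl.
        - eapply deq_trans.
          + apply (dsum_d_cong2 l (fun p => Cmult beta (fst p))
                     (fun p => dsubst (DScal m1 (snd p)) vd) (fun p => DScal m1 (dsubst (snd p) vd))).
            intros; apply dsubst_scal.
          + eapply deq_trans; [apply dsum_inner_scal|]. apply deq_scal_cong.
            apply deq_sym. eapply deq_trans; [apply (scal_dsum_d beta (map (fun p => (fst p, dsubst (snd p) vd)) l))|].
            rewrite map_map; simpl. apply deq_refl. }
      eapply deq_trans; [apply deq_add_cong; [apply deq_refl|apply deq_scal_scal]|].
      eapply deq_trans; [apply deq_sym, deq_scal_distr|].
      replace (Cplus alpha (Cmult m1 beta)) with (RtoC 1).
      + apply deq_one.
      + unfold alpha, beta, m1; apply injective_projections; simpl; lra. }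
  destruct (Hp d' Hsem) as [w [_ Hw]].
  pose proof (coef_deq _ _ (deq_trans _ _ _ (deq_sym _ _ Hd'2) Hw) t1) as E.
  simpl in E. rewrite delta_refl in E.
  destruct (delta_01 t2 t1) as [E1|E1]; rewrite E1 in E;
  destruct (delta_01 (TVal w) t1) as [E2|E2]; rewrite E2 in E;
  apply (f_equal snd) in E; unfold alpha, beta in E; simpl in E; lra.
Qed.

Theorem lemma5 : forall A B : ty,
  pure TyU /\ pure (TyFlat A) /\ pure (TyArr A B) /\
  (pure A -> pure B -> pure (TySum A B) /\ pure (TyProd A B)) /\
  ((exists d, sem (TySharp A) d) -> ~ pure (TySharp A)) /\
  ((exists d, sem (TyArrL A B) d) -> ~ pure (TyArrL A B)).
Proof.
  intros A B.
  split; [apply pure_U|]. split; [apply pure_Flat|]. split; [apply pure_Arr|].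
  split; [intros; split; [apply pure_Sum|apply pure_Prod]; auto|].
  split; [apply npure_Sharp|apply npure_ArrL].
Qed.
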